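(* Let $n \ge 1$ and let $X_1,\dots,X_n$ be independent Bernoulli random variables with $P(X_i=1)=p_i$, where $p_1 \le p_2 \le \cdots \le p_n$. For an integer $\theta$, let $\Pi_\theta(X_1,\dots,X_n)=1$ if $\sum_i X_i \ge \theta$ and $0$ otherwise. Consider adaptive transmission orderings: at each step a node that has not yet transmitted is chosen as a (deterministic) function of the bits broadcast so far, and it broadcasts its bit $X_i$; the process stops once the value of the function is determined by the broadcast bits. Then for every $0 \le k \le n-1$, among the orderings that minimize the expected number of broadcast bits needed to determine $\Pi_{n-k}(X_1,\dots,X_n)$, there is one in which node $k+1$ transmits first. Equivalently, defining for a set $S$ of nodes and integer $\theta$: $C(S,\theta)=0$ if $\theta\le 0$ or $\theta>|S|$, and otherwise $C(S,\theta)=\min_{i\in S}\{1+p_i\,C(S\setminus\{i\},\theta-1)+(1-p_i)\,C(S\setminus\{i\},\theta)\}$, the minimum defining $C(\{1,\dots,n\},n-k)$ is attained at $i=k+1$.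
   Context: Setting: a collocated (broadcast) network of $n$ nodes, every transmission is heard by all nodes, at most one node transmits at a time, and collisions convey no information, so the identity of the node sending the $j$-th bit depends only on the previously broadcast bits. Each node $i$ holds a single bit $X_i$, and every node must compute $\Pi_{n-k}(X_1,\dots,X_n)$ with zero error. $C(S,\theta)$ is the minimum expected number of broadcast bits needed to compute the threshold function with threshold $\theta$ of the bits of the nodes in $S$. *)

(* Defs.v *)
From HB Require Import structures.
From mathcomp Require Import all_boot all_order all_algebra.
Set Implicit Arguments. Unset Strict Implicit. Unset Printing Implicit Defensive.
Import Order.TTheory GRing.Theory Num.Theory.
Local Open Scope ring_scope.

(* Minimum of a list of reals (0 on the empty list; never used on an empty list
   below, since C only takes a minimum when 1 <= theta <= |S|). *)
Definition minlist (R : realFieldType) (l : seq R) : R :=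
  match l with [::] => 0 | x :: l' => foldr Num.min x l' end.

(* Nodes are 'I_n (node i+1 of the paper is the ordinal i); p i = P(X_i = 1).
   Cf fuel S theta is C(S, theta), computed by recursion on the fuel #|S|. *)
Fixpoint Cf (R : realFieldType) (n : nat) (p : 'I_n -> R)
    (fuel : nat) (S : {set 'I_n}) (theta : nat) : R :=
  match fuel with
  | 0%N => 0
  | fuel'.+1 =>
      if (theta == 0%N) || (#|S| < theta)%N then 0
      else minlist [seq 1 + p i * Cf p fuel' (S :\ i) theta.-1
                          + (1 - p i) * Cf p fuel' (S :\ i) theta | i <- enum S]
  end.

Definition C (R : realFieldType) (n : nat) (p : 'I_n -> R)
    (S : {set 'I_n}) (theta : nat) : R := Cf p #|S| S theta.

Definition Cterm (R : realFieldType) (n : nat) (p : 'I_n -> R)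
    (S : {set 'I_n}) (theta : nat) (i : 'I_n) : R :=
  1 + p i * C p (S :\ i) theta.-1 + (1 - p i) * C p (S :\ i) theta.

(* Main.v *)
Require Import Defs.
From HB Require Import structures.
From mathcomp Require Import all_boot all_order all_algebra.
Import Order.TTheory GRing.Theory Num.Theory.
From mathcomp Require Import ring lra zify.
Set Implicit Arguments. Unset Strict Implicit. Unset Printing Implicit Defensive.
Local Open Scope ring_scope.
Section VV.
Variable R : realFieldType.

Definition rem_at (s : nat) (l : seq R) := take s l ++ drop s.+1 l.

Lemma rem_at0 x l : rem_at 0 (x :: l) = l.
Proof. by rewrite /rem_at /= drop0. Qed.
Lemma rem_atS j x l : rem_at j.+1 (x :: l) = x :: rem_at j l.
Proof. by []. Qed.

Lemma size_rem_at s l : (s < size l)%N -> size (rem_at s l) = (size l).-1.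
Proof.
move=> h; rewrite /rem_at size_cat size_take size_drop h; lia.
Qed.

Lemma rem_at_cat u (A C : seq R) : rem_at u (A ++ C) =
  if (u < size A)%N then rem_at u A ++ C else A ++ rem_at (u - size A) C.
Proof.
rewrite /rem_at take_cat drop_cat; case: ltnP => h.
  case: ltnP => h2; first by rewrite catA.
  have e : (u.+1 = size A)%N by lia.
  by rewrite e subnn drop0 drop_size cats0.
case: ltnP => h2; first lia.
by rewrite subSn // catA.
Qed.

Lemma mem_rem_at x s l : x \in rem_at s l -> x \in l.
Proof. by rewrite /rem_at mem_cat => /orP [/mem_take|/mem_drop]. Qed.

Fixpoint Vf (f : nat) (l : seq R) (th : nat) : R :=
  match f with
  | 0%N => 0
  | f'.+1 => if (th == 0%N) || (size l < th)%N then 0 else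
      1 + nth 0 l (size l - th) * Vf f' (rem_at (size l - th) l) th.-1
        + (1 - nth 0 l (size l - th)) * Vf f' (rem_at (size l - th) l) th
  end.

Definition V l th := Vf (size l) l th.

Lemma Vfix l th : V l th = if (th == 0%N) || (size l < th)%N then 0 else
      1 + nth 0 l (size l - th) * V (rem_at (size l - th) l) th.-1
        + (1 - nth 0 l (size l - th)) * V (rem_at (size l - th) l) th.
Proof.
rewrite /V; case: l => [|y l] /=; first by case: th.
case: ifP => // h.
have hs : ((size l).+1 - th < (size l).+1)%N by move: h; case: th => //= t _; lia.
by rewrite !size_rem_at.
Qed.

Definition in01 (l : seq R) := all (fun x => 0 <= x <= 1) l.

Lemma in01_rem_at s l : in01 l -> in01 (rem_at s l).
Proof. by move=> /allP h; apply/allP => x /mem_rem_at /h. Qed.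

Lemma in01_nth s l : in01 l -> 0 <= nth 0 l s <= 1.
Proof.
move=> /allP h; case: (ltnP s (size l)) => hs; first by apply: h; rewrite mem_nth.
by rewrite nth_default // lexx ler01.
Qed.

Lemma V_ge0 l th : in01 l -> 0 <= V l th.
Proof.
move=> h01; have [N hN] : exists N, (size l <= N)%N by exists (size l).
elim: N l th hN h01 => [|N IH] l th hN h01.
  by rewrite Vfix; case: l hN h01 => //= _ _; case: th.
rewrite Vfix; case: ifP => // /negbT; rewrite negb_or -leqNgt => /andP [ht0 ht1].
have := in01_nth (size l - th) h01 => /andP [h0 h1].
have hs : (size (rem_at (size l - th) l) <= N)%N.
  rewrite size_rem_at; lia.
have a1 := IH _ th.-1 hs (in01_rem_at _ h01).
have a2 := IH _ th hs (in01_rem_at _ h01).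
have h2 : 0 <= 1 - nth 0 l (size l - th) by lra.
have := mulr_ge0 h0 a1; have := mulr_ge0 h2 a2; lra.
Qed.

Lemma nth_slot_lt (A B : seq R) c u : (u < size A)%N -> nth 0 (A ++ c :: B) u = nth 0 A u.
Proof. by move=> h; rewrite nth_cat h. Qed.
Lemma nth_slot_eq (A B : seq R) c : nth 0 (A ++ c :: B) (size A) = c.
Proof. by rewrite nth_cat ltnn subnn. Qed.
Lemma nth_slot_gt (A B : seq R) c u : (size A < u)%N -> nth 0 (A ++ c :: B) u = nth 0 B (u - size A).-1.
Proof.
move=> h; rewrite nth_cat ltnNge (ltnW h) /=.
by case e: (u - size A)%N => [|m] /=; [lia|].
Qed.
Lemma rem_slot_lt (A B : seq R) c u : (u < size A)%N -> rem_at u (A ++ c :: B) = rem_at u A ++ c :: B.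
Proof. by move=> h; rewrite rem_at_cat h. Qed.
Lemma rem_slot_eq (A B : seq R) c : rem_at (size A) (A ++ c :: B) = A ++ B.
Proof. by rewrite rem_at_cat ltnn subnn rem_at0. Qed.
Lemma rem_slot_gt (A B : seq R) c u : (size A < u)%N ->
  rem_at u (A ++ c :: B) = A ++ c :: rem_at (u - size A).-1 B.
Proof.
move=> h; rewrite rem_at_cat ltnNge (ltnW h) /=.
by case e: (u - size A)%N => [|m] /=; [lia|].
Qed.

Lemma Vaff (A B : seq R) x th : V (A ++ x :: B) th =
  (1 - x) * V (A ++ 0 :: B) th + x * V (A ++ 1 :: B) th.
Proof.
have [N hN] : exists N, (size A + size B <= N)%N by exists (size A + size B)%N.
elim: N A B th hN => [|N IH] A B th hN.
  case: A B hN => [|//] [|//] _.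
  rewrite (Vfix [:: x]) (Vfix [:: 0]) (Vfix [:: 1]) /=.
  case: ifP => hth; first ring.
  have -> : th = 1%N by move: hth; case: th => [|[|t]].
  rewrite /rem_at /=; ring.
rewrite (Vfix (A ++ x :: B)) (Vfix (A ++ 0 :: B)) (Vfix (A ++ 1 :: B)) !size_cat /=.
case: ifP => [_|/negbT]; first ring.
rewrite negb_or -leqNgt => /andP [ht0 ht1].
set u := (size A + (size B).+1 - th)%N.
case: (ltngtP u (size A)) => hu.
- rewrite !nth_slot_lt // !rem_slot_lt //.
  have hs : (size (rem_at u A) + size B <= N)%N.
    rewrite size_rem_at //; lia.
  rewrite (IH _ _ th.-1 hs) (IH _ _ th hs); ring.
- rewrite !nth_slot_gt // !rem_slot_gt //.
  have hs : (size A + size (rem_at (u - size A).-1 B) <= N)%N.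
    rewrite size_rem_at //; lia.
  rewrite (IH _ _ th.-1 hs) (IH _ _ th hs); ring.
- rewrite hu !nth_slot_eq !rem_slot_eq; ring.
Qed.

Lemma V_slot_start (A B : seq R) c : V (A ++ c :: B) (size B).+1 =
  1 + c * V (A ++ B) (size B) + (1 - c) * V (A ++ B) (size B).+1.
Proof.
rewrite Vfix size_cat /=.
have -> : (size A + (size B).+1 < (size B).+1)%N = false by lia.
have -> : (size A + (size B).+1 - (size B).+1)%N = size A by lia.
by rewrite nth_slot_eq rem_slot_eq.
Qed.

Lemma step_le (y v1 v0 w1 w0 : R) : 0 <= y <= 1 -> v1 <= w1 -> v0 <= w0 ->
  1 + y * v1 + (1 - y) * v0 <= 1 + y * w1 + (1 - y) * w0.
Proof. move=> /andP [h0 h1] h2 h3; nra. Qed.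

Lemma in01_cat (A B : seq R) : in01 (A ++ B) = in01 A && in01 B.
Proof. by rewrite /in01 all_cat. Qed.

Lemma nth_slot2 (A B : seq R) a b : nth 0 (A ++ a :: b :: B) (size A).+1 = b.
Proof. by rewrite -cat_rcons -(size_rcons A a) nth_slot_eq. Qed.
Lemma rem_slot2 (A B : seq R) a b : rem_at (size A).+1 (A ++ a :: b :: B) = A ++ a :: B.
Proof. by rewrite -cat_rcons -(size_rcons A a) rem_slot_eq cat_rcons. Qed.
Lemma V0th (l : seq R) : V l 0 = 0.
Proof. by rewrite Vfix. Qed.
Lemma Vbig (l : seq R) th : (size l < th)%N -> V l th = 0.
Proof. by move=> h; rewrite Vfix h orbT. Qed.

Lemma Vswap (A B : seq R) a b th : in01 A -> in01 B -> 0 <= a -> a <= b -> b <= 1 ->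
  V (A ++ a :: b :: B) th <= V (A ++ b :: a :: B) th.
Proof.
have [N hN] : exists N, (size A + size B < N)%N by exists (size A + size B).+1.
elim: N A B a b th hN => [//|N IH] A B a b th hN hA hB ha hab hb.
rewrite (Vfix (A ++ a :: b :: B)) (Vfix (A ++ b :: a :: B)) !size_cat /=.
case: ifP => [_|/negbT]; first exact: lexx.
rewrite negb_or -leqNgt => /andP [ht0 ht1].
set u := (size A + (size B).+2 - th)%N.
case: (ltngtP u (size A)) => hu.
- rewrite !nth_slot_lt // !rem_slot_lt //.
  have hs : (size (rem_at u A) + size B < N)%N by rewrite size_rem_at //; lia.
  apply: step_le; first exact: in01_nth.
    apply: IH => //; exact: in01_rem_at.
  apply: IH => //; exact: in01_rem_at.
- case: (ltngtP u (size A).+1) => hu2; first lia.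
  + have e : ((u - size A).-1 = ((u - size A).-2).+1)%N by lia.
    rewrite !nth_slot_gt // !rem_slot_gt // e /= rem_atS.
    have hs : (size A + size (rem_at (u - size A).-2 B) < N)%N.
      rewrite size_rem_at //; lia.
    apply: step_le; first exact: in01_nth.
      apply: IH => //; exact: in01_rem_at.
    apply: IH => //; exact: in01_rem_at.
  + rewrite hu2 !nth_slot2 !rem_slot2.
    rewrite (Vaff A B a th.-1) (Vaff A B a th) (Vaff A B b th.-1) (Vaff A B b th).
    have eth : th = (size B).+1 by lia.
    have key : V (A ++ 0 :: B) th.-1 <= V (A ++ 1 :: B) th.
      rewrite eth V_slot_start /=.
      have hAB : 0 <= V (A ++ B) (size B) by apply: V_ge0; rewrite in01_cat hA hB.
      clear u hu hu2 ht1; case: B hB hN eth hAB => [|z B'] hB hN eth hAB.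
        rewrite V0th; lra.
      have e : V (A ++ z :: 0 :: B') (size B').+1 = 1 + V (A ++ z :: B') (size B').+1.
        by have := V_slot_start (rcons A z) B' 0; rewrite !cat_rcons => ->; ring.
      move: hB; rewrite /in01 /= => /andP [/andP [hz0 hz1] hB'].
      have h := IH A B' 0 z (size B').+1 ltac:(simpl in hN; lia) hA hB' (lexx 0) hz0 hz1.
      rewrite e in h; lra.
    have h1 : 0 <= b - a by rewrite subr_ge0.
    have h2 : 0 <= V (A ++ 1 :: B) th - V (A ++ 0 :: B) th.-1 by rewrite subr_ge0.
    have := mulr_ge0 h1 h2; nra.
- rewrite hu !nth_slot_eq !rem_slot_eq.
  rewrite (Vaff A B a th.-1) (Vaff A B a th) (Vaff A B b th.-1) (Vaff A B b th).
  have eth : th = (size B).+2 by lia.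
  have key : V (A ++ 1 :: B) th <= V (A ++ 0 :: B) th.-1.
    rewrite eth /= V_slot_start /=.
    have hAB : 0 <= V (A ++ B) (size B).+1 by apply: V_ge0; rewrite in01_cat hA hB.
    clear u hu ht1; case/lastP: A hA hN eth hAB => [|A' y] hA hN eth hAB.
      rewrite Vbig /=; [lra|lia].
    rewrite cat_rcons.
    move: hA; rewrite /in01 all_rcons => /andP [/andP [hy0 hy1] hA'].
    have := IH A' B y 1 (size B).+2.
    rewrite size_rcons in hN.
    move=> h; have {h} h := h ltac:(lia) hA' hB hy0 hy1 (lexx 1).
    apply: (le_trans h).
    have -> : (size B).+2 = (size (y :: B)).+1 by [].
    rewrite V_slot_start /= -cat_rcons; lra.
  have h1 : 0 <= b - a by rewrite subr_ge0.
  have h2 : 0 <= V (A ++ 0 :: B) th.-1 - V (A ++ 1 :: B) th by rewrite subr_ge0.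
  have := mulr_ge0 h1 h2; nra.
Qed.

Lemma moveup (C A D : seq R) x th : in01 A -> in01 C -> in01 D -> 0 <= x <= 1 ->
  all (fun c => x <= c) C -> V (A ++ x :: C ++ D) th <= V (A ++ C ++ x :: D) th.
Proof.
elim: C A => [//|c C IH] A hA hC hD hx hxC.
move: hC hxC; rewrite /in01 /= => /andP [/andP [hc0 hc1] hC] /andP [hxc hxC].
apply: le_trans (_ : V (A ++ c :: x :: C ++ D) th <= _).
  apply: Vswap => //; [by rewrite /in01 all_cat hC; exact: hD | by case/andP: hx].
have e1 : A ++ c :: x :: C ++ D = rcons A c ++ x :: C ++ D by rewrite cat_rcons.
have e2 : A ++ (c :: C) ++ x :: D = rcons A c ++ C ++ x :: D by rewrite cat_rcons.
rewrite e1 e2; apply: IH => //.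
by rewrite /in01 all_rcons hc0 hc1.
Qed.

Lemma movedown (C A D : seq R) x th : in01 A -> in01 C -> in01 D -> 0 <= x <= 1 ->
  all (fun c => c <= x) C -> V (A ++ C ++ x :: D) th <= V (A ++ x :: C ++ D) th.
Proof.
elim: C A => [//|c C IH] A hA hC hD hx hxC.
move: hC hxC; rewrite /in01 /= => /andP [/andP [hc0 hc1] hC] /andP [hxc hxC].
apply: le_trans (_ : V (A ++ c :: x :: C ++ D) th <= _); last first.
  apply: Vswap => //; [by rewrite /in01 all_cat hC; exact: hD | by case/andP: hx].
have e1 : A ++ c :: x :: C ++ D = rcons A c ++ x :: C ++ D by rewrite cat_rcons.
have e2 : A ++ (c :: C) ++ x :: D = rcons A c ++ C ++ x :: D by rewrite cat_rcons.
rewrite e1 e2; apply: IH => //.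
by rewrite /in01 all_rcons hc0 hc1.
Qed.

Lemma Vopt (A B : seq R) x th : pairwise <=%R (A ++ x :: B) -> in01 (A ++ x :: B) ->
  (0 < th)%N -> (th <= size A + (size B).+1)%N ->
  V (A ++ x :: B) th <= 1 + x * V (A ++ B) th.-1 + (1 - x) * V (A ++ B) th.
Proof.
move=> hp h01 ht0 ht1.
have hA : in01 A by move: h01; rewrite in01_cat => /andP [].
have hxB : in01 (x :: B) by move: h01; rewrite in01_cat => /andP [].
move: (hxB); rewrite /in01 /= => /andP [hx hB].
move: hp; rewrite pairwise_cat => /and3P [hAxB _ /= /andP [hxle _]].
set s := (size A + (size B).+1 - th)%N.
case: (leqP (size A) s) => hs.
- rewrite -(cat_take_drop (s - size A) B).
  apply: (le_trans (moveup th _ _ _ _ _)) => //.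
  + by apply/allP => c /mem_take; move/allP: hB; apply.
  + by apply/allP => c /mem_drop; move/allP: hB; apply.
  + by apply/allP => c /mem_take; move/allP: hxle; apply.
  have eth : th = (size (drop (s - size A) B)).+1 by rewrite size_drop; lia.
  have := V_slot_start (A ++ take (s - size A) B) (drop (s - size A) B) x.
  by rewrite -eth -!catA => ->; rewrite eth /=; exact: lexx.
- rewrite -(cat_take_drop s A) -catA.
  apply: (le_trans (movedown th _ _ _ _ _)) => //.
  + by apply/allP => c /mem_take; move/allP: hA; apply.
  + by apply/allP => c /mem_drop; move/allP: hA; apply.
  + apply/allP => c /mem_drop hc.
    by move/allP: hAxB => /(_ c hc) /= /andP [].
  have eth : th = (size (drop s A ++ B)).+1 by rewrite size_cat size_drop; lia.
  have := V_slot_start (take s A) (drop s A ++ B) x.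
  by rewrite -eth !catA cat_take_drop => ->; rewrite eth /=; exact: lexx.
Qed.

End VV.
Lemma minlist_le (R : realFieldType) (l : seq R) y : y \in l -> minlist l <= y.
Proof.
case: l => [//|x l] /=; elim: l x => [|z l IH] x /=.
  by rewrite inE => /eqP ->.
rewrite !inE => /orP [/eqP e|/orP [/eqP ->|hy]].
- rewrite ge_min; apply/orP; right; apply: IH; by rewrite e mem_head.
- by rewrite ge_min lexx.
- rewrite ge_min; apply/orP; right; apply: IH; by rewrite inE hy orbT.
Qed.

Lemma minlist_ge (R : realFieldType) (l : seq R) v : l != [::] ->
  all (fun y => v <= y) l -> v <= minlist l.
Proof.
case: l => [//|x l] _ /= /andP [hx hl]; elim: l hl => [//|z l IH] /= /andP [hz hl].
by rewrite le_min hz IH.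
Qed.

Lemma map_rem_at (R : realFieldType) (T : eqType) (f : T -> R) x s :
  map f (rem x s) = rem_at (index x s) (map f s).
Proof.
elim: s => [//|y s IH] /=; case: eqP => _ /=; first by rewrite rem_at0.
by rewrite rem_atS IH.
Qed.

Lemma enum_setD1 n (S : {set 'I_n}) i : enum (S :\ i) = rem i (enum S).
Proof.
rewrite rem_filter ?enum_uniq // /enum_mem -filter_predI; apply: eq_filter => x /=.
by rewrite in_setD1.
Qed.

Lemma Cfix (R : realFieldType) n (p : 'I_n -> R) S th :
  C p S th = if (th == 0%N) || (#|S| < th)%N then 0
             else minlist [seq Cterm p S th i | i <- enum S].
Proof.
rewrite /C; case e: #|S| => [|f] /=; first by case: th.
rewrite e; case: ifP => // _; f_equal; apply/eq_in_map => i; rewrite mem_enum => hi.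
rewrite /Cterm /C.
have hc : #|S :\ i| = f by move: e; rewrite (cardsD1 i S) hi add1n => -[].
by rewrite hc.
Qed.

Definition lst (R : realFieldType) n (p : 'I_n -> R) (S : {set 'I_n}) := [seq p i | i <- enum S].

Lemma lst_in01 (R : realFieldType) n (p : 'I_n -> R) (S : {set 'I_n}) :
  (forall i, 0 <= p i <= 1) -> in01 (lst p S).
Proof. by move=> h; apply/allP => x /mapP [i _ ->]. Qed.

Lemma lst_sorted (R : realFieldType) n (p : 'I_n -> R) (S : {set 'I_n}) :
  (forall i j : 'I_n, (i <= j)%N -> p i <= p j) -> pairwise <=%R (lst p S).
Proof.
move=> hm; rewrite pairwise_map.
apply: (sub_pairwise (r := fun i j : 'I_n => (i <= j)%N)); first by move=> i j /hm.
rewrite /enum_mem; apply: pairwise_filter.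
have := iota_sorted 0 n; rewrite -val_enum_ord (sorted_pairwise leq_trans) pairwise_map.
by rewrite enumT.
Qed.

Lemma lst_setD1 (R : realFieldType) n (p : 'I_n -> R) (S : {set 'I_n}) i :
  lst p (S :\ i) = rem_at (index i (enum S)) (lst p S).
Proof. by rewrite /lst enum_setD1 map_rem_at. Qed.

Lemma lst_nth (R : realFieldType) n (p : 'I_n -> R) (S : {set 'I_n}) i : i \in S ->
  nth 0 (lst p S) (index i (enum S)) = p i.
Proof.
move=> hi; have hi' : i \in enum S by rewrite mem_enum.
by rewrite /lst (nth_map i) ?index_mem // nth_index.
Qed.

Lemma Wge (R : realFieldType) (l : seq R) j th : pairwise <=%R l -> in01 l ->
  (j < size l)%N -> (0 < th)%N -> (th <= size l)%N ->
  V l th <= 1 + nth 0 l j * V (rem_at j l) th.-1 + (1 - nth 0 l j) * V (rem_at j l) th.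
Proof.
move=> hp h01 hj ht0 ht1.
have e : l = take j l ++ nth 0 l j :: drop j.+1 l by rewrite -drop_nth // cat_take_drop.
rewrite {1}e /rem_at; apply: Vopt; rewrite -?e //.
by move: ht1; rewrite {1}e size_cat /=; lia.
Qed.

Lemma CV (R : realFieldType) n (p : 'I_n -> R)
  (hp01 : forall i, 0 <= p i <= 1)
  (hmono : forall i j : 'I_n, (i <= j)%N -> p i <= p j) (S : {set 'I_n}) th :
  C p S th = V (lst p S) th.
Proof.
have [N hN] : exists N, (#|S| < N)%N by exists #|S|.+1.
elim: N S th hN => [//|N IH] S th hN.
have hsz : size (lst p S) = #|S| by rewrite size_map -cardE.
rewrite Cfix; case: ifP => [hc|hc]; first by rewrite Vfix hsz hc.
have hV := Vfix (lst p S) th; rewrite hsz hc in hV.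
move/negbT: hc; rewrite negb_or -leqNgt => /andP [ht0 ht1].
have hCt : forall i, i \in S -> Cterm p S th i =
   1 + nth 0 (lst p S) (index i (enum S)) * V (rem_at (index i (enum S)) (lst p S)) th.-1
   + (1 - nth 0 (lst p S) (index i (enum S))) * V (rem_at (index i (enum S)) (lst p S)) th.
  move=> i hi.
  have hc : (#|S :\ i| < N)%N by move: hN; rewrite (cardsD1 i S) hi add1n.
  by rewrite /Cterm !IH // lst_setD1 lst_nth.
have hS0 : (0 < #|S|)%N by lia.
have [j0 hj0] : exists j0 : 'I_n, j0 \in S by apply/card_gt0P.
have hs : (#|S| - th < size (enum S))%N by rewrite -cardE; lia.
set j := nth j0 (enum S) (#|S| - th).
have hj : j \in S by rewrite -mem_enum mem_nth.
have hidx : index j (enum S) = (#|S| - th)%N by rewrite index_uniq ?enum_uniq.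
apply/eqP; rewrite eq_le; apply/andP; split.
- apply: le_trans (minlist_le (y := Cterm p S th j) _) _.
    by apply: map_f; rewrite mem_enum.
  by rewrite hCt // hidx -hV.
- apply: minlist_ge.
    by case: (enum S) hs.
  apply/allP => y /mapP [i hi ->]; rewrite mem_enum in hi; rewrite hCt //.
  apply: Wge; rewrite ?hsz //; first exact: lst_sorted.
    exact: lst_in01.
    by rewrite cardE index_mem mem_enum.
  lia.
Qed.

Lemma Cterm_W (R : realFieldType) n (p : 'I_n -> R)
  (hp01 : forall i, 0 <= p i <= 1)
  (hmono : forall i j : 'I_n, (i <= j)%N -> p i <= p j) (S : {set 'I_n}) th i : i \in S ->
  Cterm p S th i =
   1 + nth 0 (lst p S) (index i (enum S)) * V (rem_at (index i (enum S)) (lst p S)) th.-1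
   + (1 - nth 0 (lst p S) (index i (enum S))) * V (rem_at (index i (enum S)) (lst p S)) th.
Proof. by move=> hi; rewrite /Cterm !(CV hp01 hmono) lst_setD1 lst_nth. Qed.

Theorem theorem1 (R : realFieldType) (n : nat) (p : 'I_n -> R)
  (hn : (1 <= n)%N)
  (hp01 : forall i, 0 <= p i <= 1)
  (hmono : forall i j : 'I_n, (i <= j)%N -> p i <= p j)
  (k : nat) (hk : (k < n)%N) :
  let i0 := Ordinal hk in
  C p [set: 'I_n] (n - k)%N = Cterm p [set: 'I_n] (n - k)%N i0 /\
  forall i : 'I_n, Cterm p [set: 'I_n] (n - k)%N i0 <= Cterm p [set: 'I_n] (n - k)%N i.
Proof.
move=> i0.
have hsz : size (lst p [set: 'I_n]) = n by rewrite size_map -cardE cardsT card_ord.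
have hidx : forall i : 'I_n, index i (enum [set: 'I_n]) = i.
  by move=> i; rewrite enum_setT -enumT index_enum_ord.
have e1 : C p [set: 'I_n] (n - k)%N = Cterm p [set: 'I_n] (n - k)%N i0.
  rewrite (CV hp01 hmono) (Cterm_W hp01 hmono) ?in_setT // hidx Vfix hsz.
  have -> : (((n - k)%N == 0%N) || (n < n - k)%N) = false by apply/negbTE; lia.
  by have -> : (n - (n - k))%N = k by lia.
split => // i.
rewrite -e1 (CV hp01 hmono) (Cterm_W hp01 hmono) ?in_setT //.
apply: Wge; rewrite ?hsz.
- exact: lst_sorted.
- exact: lst_in01.
- by rewrite hidx ltn_ord.
- lia.
- lia.
Qed.
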